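(* Let $G$ be a finite simple undirected graph and let $r<s$ be positive integers. Let $\mathcal{F}$ be the family of all $k$-$(r,s)$-nuclei of $G$, taken over all positive integers $k$ (each nucleus regarded as a set of $s$-cliques of $G$). Then $\mathcal{F}$ is a laminar family: for any $\mathcal{S},\mathcal{S}'\in\mathcal{F}$, the intersection $\mathcal{S}\cap\mathcal{S}'$ is either empty, or $\mathcal{S}\subseteq\mathcal{S}'$, or $\mathcal{S}'\subseteq\mathcal{S}$.
   Context: A $K_r$ denotes an $r$-clique (a set of $r$ pairwise adjacent vertices) of $G$. For a set $\mathcal{S}$ of $K_s$s of $G$ (with $r<s$): $K_r(\mathcal{S})$ is the set of $K_r$s contained in some $S\in\mathcal{S}$; the $\mathcal{S}$-degree of $R\in K_r(\mathcal{S})$ is the number of $S\in\mathcal{S}$ with $R\subseteq S$; two $K_r$s $R,R'$ are $\mathcal{S}$-connected if there is a sequence $R=R_1,R_2,\dots,R_m=R'$ in $K_r(\mathcal{S})$ such that for each $i$ some $S\in\mathcal{S}$ contains $R_i\cup R_{i+1}$. For positive integers $k$ and $r<s$, a $k$-$(r,s)$-nucleus is a set $\mathcal{S}$ of $K_s$s of $G$ that is maximal (under inclusion) among sets of $K_s$s satisfying: (i) every $R\in K_r(\mathcal{S})$ has $\mathcal{S}$-degree at least $k$; (ii) any $R,R'\in K_r(\mathcal{S})$ are $\mathcal{S}$-connected. *)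

(* Defs.v *)
From mathcomp Require Import all_boot.
Set Implicit Arguments. Unset Strict Implicit. Unset Printing Implicit Defensive.

Section Nucleus.
Variables (T : finType) (e : rel T).

Definition is_clique (r : nat) (A : {set T}) : bool :=
  (#|A| == r) && [forall x in A, forall y in A, (x != y) ==> e x y].

Definition Kr (r : nat) (S : {set {set T}}) : {set {set T}} :=
  [set R : {set T} | is_clique r R && [exists X in S, R \subset X]].

Definition sdeg (S : {set {set T}}) (R : {set T}) : nat :=
  #|[set X in S | R \subset X]|.

Definition sstep (r : nat) (S : {set {set T}}) : rel {set T} :=
  fun R R' => [&& R \in Kr r S, R' \in Kr r S & [exists X in S, (R :|: R') \subset X]].

Definition sconnected (r : nat) (S : {set {set T}}) (R R' : {set T}) : bool :=
  connect (sstep r S) R R'.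

Definition nucleus_cond (k r s : nat) (S : {set {set T}}) : Prop :=
  [/\ forall X, X \in S -> is_clique s X,
      forall R, R \in Kr r S -> k <= sdeg S R
    & forall R R', R \in Kr r S -> R' \in Kr r S -> sconnected r S R R'].

Definition nucleus (k r s : nat) (S : {set {set T}}) : Prop :=
  nucleus_cond k r s S /\
  (forall S', nucleus_cond k r s S' -> S \subset S' -> S' = S).

End Nucleus.

(* Main.v *)
Require Import Defs.
From mathcomp Require Import all_boot.
Set Implicit Arguments.

Lemma sub_card_ex (T : finType) (A : {set T}) n :
  n <= #|A| -> exists B : {set T}, B \subset A /\ #|B| = n.
Proof.
move=> hn; exists [set x in take n (enum A)]; split.
  by apply/subsetP=> x; rewrite inE => /mem_take; rewrite mem_enum.
rewrite cardsE (card_uniqP _) ?take_uniq ?enum_uniq // size_take.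
by rewrite -cardE; case: ltngtP hn => // ->.
Qed.

Lemma clique_sub (T : finType) (e : rel T) s (X R : {set T}) r :
  is_clique e s X -> R \subset X -> #|R| = r -> is_clique e r R.
Proof.
case/andP=> _ /forallP H sRX cR; rewrite /is_clique cR eqxx /=.
apply/forallP=> x; apply/implyP=> xR; apply/forallP=> y; apply/implyP=> yR.
have := H x; move/implyP/(_ (subsetP sRX _ xR))/forallP/(_ y)/implyP.
by apply; apply: (subsetP sRX).
Qed.

Lemma Kr_sub (T : finType) (e : rel T) r (S S' : {set {set T}}) :
  S \subset S' -> Kr e r S \subset Kr e r S'.
Proof.
move=> sS; apply/subsetP=> R; rewrite !inE => /andP[-> /existsP[X /andP[XS RX]]].
by apply/existsP; exists X; rewrite (subsetP sS _ XS).
Qed.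

Lemma conn_sub (T : finType) (e : rel T) r (S S' : {set {set T}}) R R' :
  S \subset S' -> sconnected e r S R R' -> sconnected e r S' R R'.
Proof.
move=> sS; apply: connect_sub => x y; rewrite /sstep => /and3P[xK yK /existsP[X /andP[XS sX]]].
apply: connect1; rewrite /sstep; apply/and3P; split.
- exact: (subsetP (Kr_sub e r sS) _ xK).
- exact: (subsetP (Kr_sub e r sS) _ yK).
-
by apply/existsP; exists X; rewrite (subsetP sS _ XS).
Qed.

Lemma KrU (T : finType) (e : rel T) r (S S' : {set {set T}}) R :
  R \in Kr e r (S :|: S') -> R \in Kr e r S \/ R \in Kr e r S'.
Proof.
rewrite !inE => /andP[c /existsP[X /andP[]]]; rewrite inE => /orP[] XS RX.
  by left; rewrite c; apply/existsP; exists X; rewrite XS.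
by right; rewrite c; apply/existsP; exists X; rewrite XS.
Qed.

Lemma main_half (T : finType) (e : rel T) r s (r_lt_s : r < s)
  k k' (hk : k <= k') (S S' : {set {set T}}) :
  nucleus e k r s S -> nucleus e k' r s S' ->
  S :&: S' != set0 -> S' \subset S.
Proof.
move=> [[cS dS nS] mS] [[cS' dS' nS'] _] /set0Pn[X]; rewrite inE => /andP[XS XS'].
have cX := cS X XS.
have [R0 [R0X cR0]] : exists R0 : {set T}, R0 \subset X /\ #|R0| = r.
  apply: sub_card_ex; case/andP: cX => /eqP -> _; exact: ltnW.
have cl0 := @clique_sub _ e _ _ _ _ cX R0X cR0.
have R0S : R0 \in Kr e r S by rewrite inE cl0; apply/existsP; exists X; rewrite XS.
have R0S' : R0 \in Kr e r S' by rewrite inE cl0; apply/existsP; exists X; rewrite XS'.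
have sU : S \subset S :|: S' by apply: subsetUl.
have sU' : S' \subset S :|: S' by apply: subsetUr.
have cond : nucleus_cond e k r s (S :|: S').
  split.
  - by move=> Y; rewrite inE => /orP[]; [apply: cS | apply: cS'].
  - move=> R /KrU [] RK.
      apply: leq_trans (dS _ RK) _; apply: subset_leq_card.
      by apply/subsetP=> Y; rewrite !inE => /andP[-> ->].
    apply: leq_trans hk _; apply: leq_trans (dS' _ RK) _; apply: subset_leq_card.
    by apply/subsetP=> Y; rewrite !inE => /andP[-> ->]; rewrite orbT.
  - move=> R R' /KrU[] RK /KrU[] RK'.
    + exact: @conn_sub _ e _ _ _ _ _ sU (nS _ _ RK RK').
    + have h1 := @conn_sub _ e _ _ _ _ _ sU (nS _ _ RK R0S).
      have h2 := @conn_sub _ e _ _ _ _ _ sU' (nS' _ _ R0S' RK').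
      exact: connect_trans h1 h2.
    + have h1 := @conn_sub _ e _ _ _ _ _ sU' (nS' _ _ RK R0S').
      have h2 := @conn_sub _ e _ _ _ _ _ sU (nS _ _ R0S RK').
      exact: connect_trans h1 h2.
    + exact: @conn_sub _ e _ _ _ _ _ sU' (nS' _ _ RK RK').
have := mS _ cond sU => eqU.
by rewrite -eqU subsetUr.
Qed.

Unset Implicit Arguments.

Theorem lemma1 (T : finType) (e : rel T)
  (e_sym : symmetric e) (e_irr : irreflexive e)
  (r s : nat) (r_pos : 0 < r) (r_lt_s : r < s)
  (k k' : nat) (k_pos : 0 < k) (k'_pos : 0 < k')
  (S S' : {set {set T}}) :
  nucleus e k r s S -> nucleus e k' r s S' ->
  S :&: S' = set0 \/ S \subset S' \/ S' \subset S.
Proof.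
move=> nS nS'.
have [->|ne] := eqVneq (S :&: S') set0; first by left.
right; case: (leqP k k') => hk.
  by right; apply: (main_half r_lt_s hk nS nS' ne).
left; apply: (main_half r_lt_s (ltnW hk) nS' nS); by rewrite setIC.
Qed.
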